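(* Let $n\ge3$. The elements of $R$ whose binary representation has length $2n+7$ and begins with $100100$ are exactly $[100100(10)^{n-1}010]_2$ and $[100100(10)^n0]_2$.
   Context: Stern's sequence $(a(n))_{n\ge0}$: $a(0)=0$, $a(1)=1$, $a(2n)=a(n)$, $a(2n+1)=a(n)+a(n+1)$; $s(n)=a(n+1)$. $R$ is the set of record-setters of $s$, i.e. indices $v\ge0$ with $s(i)<s(v)$ for all $i<v$. Binary representations have no leading zeros. For a binary string $x$, $[x]_2$ is the integer it represents in base 2; $x^i$ denotes $i$-fold concatenation. *)

(* Defs.v *)
From mathcomp Require Import all_boot.
Set Implicit Arguments. Unset Strict Implicit. Unset Printing Implicit Defensive.

(* Stern's diatomic sequence a(n), computed with fuel (fuel n suffices). *)
Fixpoint stern_fuel (fuel n : nat) : nat :=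
  match fuel with
  | 0 => 0
  | f.+1 =>
    if n == 0 then 0 else if n == 1 then 1 else
    if ~~ odd n then stern_fuel f n./2
    else stern_fuel f n./2 + stern_fuel f n./2.+1
  end.
Definition a (n : nat) : nat := stern_fuel n.+1 n.
Definition s (n : nat) : nat := a n.+1.

Definition record_setter (v : nat) : Prop := forall i, i < v -> s i < s v.

(* Binary representation, most significant bit first, no leading zeros
   (bin 0 = [::]); true = 1, false = 0. *)
Fixpoint bin_fuel (fuel n : nat) : seq bool :=
  match fuel with
  | 0 => [::]
  | f.+1 => if n == 0 then [::] else rcons (bin_fuel f n./2) (odd n)
  end.
Definition bin (n : nat) : seq bool := bin_fuel n.+1 n.

Definition val2 (x : seq bool) : nat := foldl (fun (acc : nat) (b : bool) => acc.*2 + nat_of_bool b) 0 x.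

Definition srep (i : nat) (x : seq bool) : seq bool := flatten (nseq i x).

Example a_test : map a (iota 0 10) = [:: 0; 1; 1; 2; 1; 3; 2; 3; 1; 4]. Proof. by []. Qed.
Example bin_test : bin 6 = [:: true; true; false]. Proof. by []. Qed.
Example val_test : val2 [:: true; true; false] = 6. Proof. by []. Qed.

(* Main.v *)
Require Import Defs.
From mathcomp Require Import all_boot zify.
Set Implicit Arguments. Unset Strict Implicit.


Lemma stern_stable f1 f2 n : n < f1 -> n < f2 -> stern_fuel f1 n = stern_fuel f2 n.
Proof.
elim: f1 f2 n => [|f1 IH] [|f2] n //= h1 h2.
case: eqP => // /eqP n0; case: eqP => // /eqP n1.
have n2 : 2 <= n by lia.
have hh : n./2 < n by rewrite ltn_half_double; lia.
case hod: (odd n) => /=.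
- have hh2 : n./2.+1 < n.
    have := odd_double_half n; rewrite hod /=; lia.
    by rewrite (IH f2 n./2) ?(IH f2 n./2.+1) //; lia.
- by rewrite (IH f2) //; lia.
Qed.

Lemma a_fuel f n : n < f -> stern_fuel f n = a n.
Proof. by move=> h; rewrite /a (@stern_stable f n.+1 n h). Qed.

Lemma sternS f n : stern_fuel f.+1 n =
    if n == 0 then 0 else if n == 1 then 1 else
    if ~~ odd n then stern_fuel f n./2
    else stern_fuel f n./2 + stern_fuel f n./2.+1.
Proof. by []. Qed.

Lemma a_rec n : 2 <= n ->
  a n = if ~~ odd n then a n./2 else a n./2 + a n./2.+1.
Proof.
move=> n2; rewrite {1}/a sternS.
rewrite (_ : (n == 0) = false); last by apply/eqP; lia.
rewrite (_ : (n == 1) = false); last by apply/eqP; lia.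
have hh : n./2 < n by rewrite ltn_half_double; lia.
case hod: (odd n) => /=.
- have hh2 : n./2.+1 < n.
    have := odd_double_half n; rewrite hod /=; lia.
  by rewrite !a_fuel.
- by rewrite a_fuel.
Qed.

Lemma a_even x : a x.*2 = a x.
Proof.
case: x => [|x] //.
by rewrite a_rec ?odd_double ?doubleK //=; lia.
Qed.

Lemma a_odd x : a x.*2.+1 = a x + a x.+1.
Proof.
case: x => [|x] //.
have h : (x.+1).*2.+1./2 = x.+1 by have := half_bit_double x.+1 true; rewrite add1n.
rewrite a_rec; last by lia. by rewrite h oddS odd_double.
Qed.


Lemma foldl_val w acc :
  foldl (fun (acc : nat) (b : bool) => acc.*2 + nat_of_bool b) acc w = acc * 2 ^ size w + val2 w.
Proof.
elim: w acc => [|b w IH] acc /=; first by rewrite muln1 addn0.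
rewrite /val2 /= !IH expnS; lia.
Qed.

Lemma val2_cat u r : val2 (u ++ r) = val2 u * 2 ^ size r + val2 r.
Proof. by rewrite {1}/val2 foldl_cat foldl_val. Qed.

Lemma val2_cons b w : val2 (b :: w) = b * 2 ^ size w + val2 w.
Proof. by rewrite -cat1s val2_cat; case: b. Qed.

Lemma val2_rcons w b : val2 (rcons w b) = (val2 w).*2 + b.
Proof. by rewrite -cats1 val2_cat /= expn1; case: b; rewrite /val2 /=; lia. Qed.

Lemma val2_lt w : val2 w < 2 ^ size w.
Proof.
elim/last_ind: w => [|w b IH] //.
rewrite val2_rcons size_rcons expnS; case: b => /=; lia.
Qed.

Definition step (p : nat * nat) (b : bool) : nat * nat :=
  if b then (p.1 + p.2, p.2) else (p.1, p.1 + p.2).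
Definition run (p : nat * nat) (w : seq bool) := foldl step p w.

Lemma run_cat p u w : run p (u ++ w) = run (run p u) w.
Proof. exact: foldl_cat. Qed.

Lemma aval w : a (val2 w) = (run (0,1) w).1 /\ a (val2 w).+1 = (run (0,1) w).2.
Proof.
elim/last_ind: w => [|w b [IH1 IH2]] //.
rewrite val2_rcons /run foldl_rcons -/(run _ _).
case: b => /=; rewrite /step /=.
- by rewrite addn1 a_odd -doubleS a_even IH1 IH2.
- by rewrite addn0 a_even a_odd IH1 IH2.
Qed.

Lemma aval1 w : a (val2 w) = (run (0,1) w).1.
Proof. by case: (aval w). Qed.

Fixpoint nbits (L j : nat) : seq bool :=
  if L is L'.+1 then rcons (nbits L' j./2) (odd j) else [::].

Lemma size_nbits L j : size (nbits L j) = L.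
Proof. by elim: L j => [|L IH] j //=; rewrite size_rcons IH. Qed.

Lemma val2_nbits L j : j < 2 ^ L -> val2 (nbits L j) = j.
Proof.
elim: L j => [|L IH] j /=; first by rewrite expn0; case: j.
move=> hj; rewrite val2_rcons IH; first by rewrite -[RHS]odd_double_half addnC.
by rewrite ltn_half_double -mul2n -expnS.
Qed.

Lemma bin_fuel0 f : bin_fuel f 0 = [::].
Proof. by case: f. Qed.

Lemma bin_fuel_val f v : v < f -> val2 (bin_fuel f v) = v.
Proof.
elim: f v => [|f IH] v //= hv.
case: eqP => [->|/eqP v0] //.
rewrite val2_rcons IH; first by rewrite -[RHS]odd_double_half addnC.
rewrite ltn_half_double; lia.
Qed.

Lemma bin_val v : val2 (bin v) = v.
Proof. exact: bin_fuel_val. Qed.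

Lemma val2_true_pos w : 0 < val2 (true :: w).
Proof. rewrite val2_cons /=; have := expn_gt0 2 (size w); lia. Qed.

Lemma bin_fuel_word w f : val2 (true :: w) < f -> bin_fuel f (val2 (true :: w)) = true :: w.
Proof.
elim/last_ind: w f => [|w b IH] [|f] //=.
- by move=> h; rewrite bin_fuel0.
- rewrite -rcons_cons val2_rcons => h.
  have p := val2_true_pos w.
  rewrite (_ : ((val2 (true :: w)).*2 + b == 0) = false); last by apply/eqP; lia.
  have -> : ((val2 (true :: w)).*2 + b)./2 = val2 (true :: w).
    by rewrite addnC half_bit_double.
  rewrite IH; last by lia.
  by rewrite addnC oddD odd_double /=; case: (b) => /=.
Qed.

Lemma bin_word w : bin (val2 (true :: w)) = true :: w.
Proof. exact: bin_fuel_word. Qed.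


Fixpoint fib (n : nat) : nat :=
  match n with 0 => 0 | 1 => 1 | (m.+1 as k).+1 => fib k + fib m end.

Lemma fibSS n : fib n.+2 = fib n.+1 + fib n.
Proof. by []. Qed.

Lemma fib0 : fib 0 = 0. Proof. by []. Qed.
Lemma fib1 : fib 1 = 1. Proof. by []. Qed.
Arguments fib : simpl never.

Lemma fib_add m n : fib (m + n).+1 = fib m.+1 * fib n.+1 + fib m * fib n.
Proof.
elim: m n => [|m IH] n; first by rewrite add0n fib0 fib1; lia.
rewrite addSnnS IH !fibSS; lia.
Qed.

Lemma fib_mono n : fib n <= fib n.+1.
Proof. by case: n => [|n]; rewrite ?fib0 // fibSS leq_addr. Qed.

Lemma fib_pos n : 0 < fib n.+1.
Proof.
elim: n => [|n IH]; rewrite ?fib1 // fibSS; lia.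
Qed.

Fixpoint Mx (t : nat) (p : nat * nat) : nat :=
  if t is t'.+1 then maxn (Mx t' (step p false)) (Mx t' (step p true)) else p.1.

Lemma Mx_ge r p : (run p r).1 <= Mx (size r) p.
Proof.
elim: r p => [|b r IH] p //=.
case: b; rewrite -/(run _ _); [apply: leq_trans (IH _) (leq_maxr _ _)|apply: leq_trans (IH _) (leq_maxl _ _)].
Qed.

Lemma MxS t p : Mx t.+1 p = maxn (Mx t (step p false)) (Mx t (step p true)).
Proof. by []. Qed.

Lemma Mx_fib t x y : Mx t (x, y) <= fib t.+1 * maxn x y + fib t * minn x y.
Proof.
elim: t x y => [|t IH] x y; first by rewrite /= fib0 fib1; lia.
rewrite MxS (_ : step (x,y) false = (x, x+y)) // (_ : step (x,y) true = (x+y,y)) // fibSS.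
have h1 := IH x (x + y); have h2 := IH (x + y) y.
have e1 : maxn x (x + y) = x + y by lia.
have e2 : minn x (x + y) = x by lia.
have e3 : maxn (x + y) y = x + y by lia.
have e4 : minn (x + y) y = y by lia.
rewrite e1 e2 in h1; rewrite e3 e4 in h2.
rewrite geq_max; apply/andP; split.
- apply: leq_trans h1 _. case: (leqP x y) => hxy.
  + nia.
  + nia.
- apply: leq_trans h2 _. case: (leqP x y) => hxy.
  + nia.
  + nia.
Qed.

Fixpoint BB (p : nat * nat) (q : seq bool) : nat :=
  match q with
  | [::] => 0
  | b :: q' => if b then maxn (Mx (size q') (step p false)) (BB (step p true) q')
               else BB (step p false) q'
  end.

Lemma BB_ge q r p : size r = size q -> val2 r < val2 q -> (run p r).1 <= BB p q.
Proof.
elim: q r p => [|b q IH] [|c r] p //= hs.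
have hs' : size r = size q by case: hs.
rewrite !val2_cons hs' => hlt.
have l1 := val2_lt r; have l2 := val2_lt q.
case: b hlt; case: c => /= hlt.
- apply: leq_trans (IH _ _ hs' _) (leq_maxr _ _); lia.
- apply: leq_trans _ (leq_maxl _ _). rewrite -/(run _ _) -hs'. exact: Mx_ge.
- lia.
- apply: IH => //; lia.
Qed.

Lemma a_le_BB q j : j < val2 q -> a j <= BB (0, 1) q.
Proof.
move=> hj.
have hj2 : j < 2 ^ size q by apply: leq_trans hj (ltnW (val2_lt q)).
rewrite -(val2_nbits hj2) aval1; apply: BB_ge; first by rewrite size_nbits.
by rewrite val2_nbits.
Qed.

Arguments Mx : simpl never.


Definition fstep (p : nat * nat) := step (step p true) false.

Lemma fstepE u v : fstep (u, v) = (u + v, u + v + v).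
Proof. by []. Qed.

Lemma srepS k (x : seq bool) : srep k.+1 x = x ++ srep k x.
Proof. by []. Qed.

Lemma srepSr k (x : seq bool) : srep k.+1 x = srep k x ++ x.
Proof.
elim: k => [|k IH]; first by rewrite srepS /= cats0.
rewrite (srepS k.+1) IH catA -srepS. by rewrite IH.
Qed.

Lemma size_srep k (x : seq bool) : size (srep k x) = k * size x.
Proof. elim: k => [|k IH] //; rewrite srepS size_cat IH; lia. Qed.

Lemma run_srep k p : run p (srep k [:: true; false]) = iter k fstep p.
Proof.
elim: k p => [|k IH] p //.
by rewrite srepS run_cat IH iterSr.
Qed.

Lemma BB_tf p R : BB p [:: true, false & R] = maxn (Mx (size R).+1 (step p false)) (BB (fstep p) R).
Proof. by []. Qed.

Lemma BB_srep k p rest C :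
  (forall i, i < k -> Mx (2 * (k - i) - 1 + size rest) (step (iter i fstep p) false) <= C) ->
  BB (iter k fstep p) rest <= C ->
  BB p (srep k [:: true; false] ++ rest) <= C.
Proof.
elim: k p => [|k IH] p hbr hlast //.
rewrite srepS -catA (BB_tf p (srep k _ ++ rest)) geq_max; apply/andP; split.
- have := hbr 0 (ltn0Sn _). rewrite size_cat size_srep.
  by rewrite (_ : 2 * (k.+1 - 0) - 1 + size rest = (k * 2 + size rest).+1) //; lia.
- apply: IH.
  + move=> i hi; have := hbr i.+1; rewrite iterSr.
    rewrite (_ : 2 * (k.+1 - i.+1) = 2 * (k - i)); last by lia.
    by apply; lia.
  + by rewrite -iterSr.
Qed.

Lemma iter_f k x y :
  (iter k fstep (x, y)).1 + fib (2 * k) * x = fib (2 * k).+1 * x + fib (2 * k) * y /\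
  (iter k fstep (x, y)).2 = fib (2 * k) * x + fib (2 * k).+1 * y.
Proof.
elim: k => [|k [IH1 IH2]]; first by rewrite /= fib0 fib1; lia.
rewrite iterS; move: IH1 IH2; case: (iter k fstep (x, y)) => u v /= IH1 IH2.
rewrite (_ : 2 * k.+1 = (2 * k).+2); last by lia.
rewrite !fibSS; split; nia.
Qed.


Definition X k := (iter k fstep (4, 11)).1.
Definition Y k := (iter k fstep (4, 11)).2.
Definition Wk k := 4 * fib (2 * k).+4.+2 + fib (2 * k).+4.+1.

Lemma XY k : X k + 4 * fib (2 * k) = 4 * fib (2 * k).+1 + 11 * fib (2 * k) /\
             Y k = 4 * fib (2 * k) + 11 * fib (2 * k).+1.
Proof. have [h1 h2] := iter_f k 4 11; rewrite /X /Y; split; lia. Qed.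

Lemma XYS k : X k.+1 = X k + Y k /\ Y k.+1 = X k + Y k + Y k.
Proof. by rewrite /X /Y iterS; case: (iter k fstep (4, 11)). Qed.

Lemma f35 j : 2 <= j -> 3 * fib (2 * j).+1 <= 5 * fib (2 * j).
Proof.
case: j => [|[|j]] // _.
rewrite (_ : 2 * j.+2 = (2 * j).+4); last by lia.
rewrite !fibSS; lia.
Qed.

Lemma f85 i : 8 * fib (2 * i) <= 5 * fib (2 * i).+1.
Proof.
case: i => [|[|i]]; first by rewrite fib0.
- by [].
- rewrite (_ : 2 * i.+2 = (2 * i).+4); last by lia.
  have := fib_mono (2 * i).
  rewrite !fibSS; lia.
Qed.

Lemma branch_le i j : 2 <= j ->
  Mx (2 * j) (step (iter i fstep (4, 11)) false) <= 4 * fib (2 * (i + j)).+4 + fib (2 * (i + j)).+3.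
Proof.
move=> hj.
have h := Mx_fib (2 * j) (X i) (X i + Y i).
change (step (iter i fstep (4, 11)) false) with (X i, X i + Y i).
apply: leq_trans h _.
rewrite (_ : maxn (X i) (X i + Y i) = X i + Y i); last by lia.
rewrite (_ : minn (X i) (X i + Y i) = X i); last by lia.
rewrite (_ : (2 * (i + j)).+4 = (2 * j + (2 * i).+3).+1); last by lia.
rewrite (_ : (2 * (i + j)).+3 = (2 * j + (2 * i).+2).+1); last by lia.
rewrite !(fib_add (2 * j)) !fibSS.
have [h1 h2] := XY i.
have h3 := f35 hj. have h4 := f85 i.
set A := fib (2 * j) in h3 *. set B := fib (2 * j).+1 in h3 *.
set a := fib (2 * i) in h1 h2 h4 *. set b := fib (2 * i).+1 in h1 h2 h4 *.
have e1 : X i = 4 * b + 7 * a by lia.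
rewrite e1 h2.
have p1 : 3 * B * (2 * a + b) <= 5 * A * (2 * a + b) by apply: leq_mul.
have p2 : 2 * A * (8 * a) <= 2 * A * (5 * b) by apply: leq_mul.
nia.
Qed.

Lemma N1 k : fib (2 * k).+4.+4.+1 <= Wk k.
Proof. rewrite /Wk !fibSS; lia. Qed.

Lemma N3 k : 3 * X k + Y k <= Wk k.
Proof.
have [h1 h2] := XY k; have := fib_mono (2 * k).
rewrite /Wk !fibSS; lia.
Qed.

Lemma N4 k : 2 <= k -> Wk k < 3 * X k + 2 * Y k.
Proof.
move=> hk; have [h1 h2] := XY k.
have hb : fib (2 * k).+1 < 2 * fib (2 * k).
  case: k hk {h1 h2} => [|[|k]] // _.
  rewrite (_ : 2 * k.+2 = (2 * k).+4); last by lia.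
  have := fib_pos (2 * k). rewrite !fibSS; lia.
rewrite /Wk !fibSS; lia.
Qed.

Lemma N5 k : X k < Y k.
Proof.
have [h1 h2] := XY k; have := fib_mono (2 * k); have := fib_pos (2 * k); lia.
Qed.

Lemma N6 k : 11 * fib (2 * k).+4 + 4 * fib (2 * k).+3 = X k.+1 + Y k.+1.
Proof.
have [h1 h2] := XY k; have [h3 h4] := XYS k.
rewrite h3 h4 !fibSS; lia.
Qed.

Lemma Wj0 k : (run (iter (k + 2) fstep (1, 4)) [:: true]).1 = Wk k.
Proof.
have [h1 h2] := iter_f (k + 2) 1 4.
move: h1 h2; rewrite /run /=.
case: (iter (k + 2) fstep (1, 4)) => u v /=.
rewrite (_ : 2 * (k + 2) = (2 * k).+4); last by lia.
rewrite /Wk !fibSS; lia.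
Qed.


Definition P0 := [:: true; false; false; true; false; false].
Definition Qw k := P0 ++ srep k [:: true; false].

Lemma iterXY k : iter k fstep (4, 11) = (X k, Y k).
Proof. by rewrite /X /Y; case: (iter k fstep (4, 11)). Qed.

Lemma runQ k : run (0, 1) (Qw k) = (X k, Y k).
Proof. by rewrite /Qw run_cat run_srep iterXY. Qed.

Lemma BB_P0 R : BB (0, 1) (P0 ++ R) =
  maxn (Mx (size R).+4.+1 (0, 1)) (maxn (Mx (size R).+2 (1, 4)) (BB (4, 11) R)).
Proof. by []. Qed.

Lemma Mx01 t : Mx t (0, 1) <= fib t.+1.
Proof. have := Mx_fib t 0 1; rewrite /=; lia. Qed.

Lemma Mx14 t : Mx t (1, 4) <= 4 * fib t.+1 + fib t.
Proof. have := Mx_fib t 1 4; rewrite /=; lia. Qed.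

Lemma branch_k k i : i < k ->
  Mx (2 * (k - i) - 1 + 3) (step (iter i fstep (4, 11)) false) <= Wk k.
Proof.
move=> hi.
rewrite (_ : 2 * (k - i) - 1 + 3 = 2 * (k.+1 - i)); last by lia.
apply: leq_trans (branch_le i _) _; first by lia.
rewrite (_ : i + (k.+1 - i) = k.+1); last by lia.
by rewrite /Wk (_ : 2 * k.+1 = (2 * k).+2); last by lia.
Qed.

Lemma Mx0 p : Mx 0 p = p.1. Proof. by []. Qed.
Lemma Mx1 x y : Mx 1 (x, y) = maxn x (x + y). Proof. by []. Qed.

Lemma le3 A B C D : A <= D -> B <= D -> C <= D -> maxn A (maxn B C) <= D.
Proof. move=> *; rewrite !geq_max; apply/and3P; split => //. Qed.

Lemma Bm1 k : BB (0, 1) (Qw k ++ [:: false; true; true]) <= Wk k.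
Proof.
rewrite /Qw -catA BB_P0 size_cat size_srep /=.
apply: le3.
- apply: leq_trans (Mx01 _) _; apply: leq_trans _ (N1 k).
  have e : (k * 2 + 3).+1.+4.+1 = (2 * k).+4.+4.+1 by lia.
  by rewrite e.
- apply: leq_trans (Mx14 _) _; rewrite /Wk.
  have e1 : (k * 2 + 3).+2.+1 = (2 * k).+4.+2 by lia.
  have e2 : (k * 2 + 3).+2 = (2 * k).+4.+1 by lia.
  by rewrite e1 e2.
apply: BB_srep; first by move=> i hi; exact: branch_k.
rewrite iterXY /= Mx1 Mx0 /=.
have := N3 k; lia.
Qed.

Lemma Bm2 k : 2 <= k -> BB (0, 1) (Qw k ++ [:: true; false; true]) <= 3 * X k + 2 * Y k.
Proof.
move=> hk; have h4 := N4 hk.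
rewrite /Qw -catA (_ : srep k [:: true; false] ++ [:: true; false; true] =
   srep k.+1 [:: true; false] ++ [:: true]); last by rewrite srepSr -catA.
rewrite BB_P0 size_cat size_srep (_ : size [:: true] = 1) //.
apply: le3.
- apply: leq_trans (Mx01 _) _; apply: leq_trans _ (ltnW h4); apply: leq_trans _ (N1 k).
  have e : (k.+1 * 2 + 1).+1.+4.+1 = (2 * k).+4.+4.+1 by lia.
  by rewrite e.
- apply: leq_trans (Mx14 _) _; apply: leq_trans _ (ltnW h4); rewrite /Wk.
  have e1 : (k.+1 * 2 + 1).+2.+1 = (2 * k).+4.+2 by lia.
  have e2 : (k.+1 * 2 + 1).+2 = (2 * k).+4.+1 by lia.
  by rewrite e1 e2.
apply: BB_srep.
- move=> i hi; case: (ltnP i k) => hik.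
  + have := branch_k hik.
    rewrite (_ : 2 * (k.+1 - i) - 1 + size [:: true] = 2 * (k - i) - 1 + 3); last by rewrite /=; lia.
    move=> h; apply: leq_trans h _; exact: ltnW.
  + have -> : i = k by lia.
    rewrite (_ : 2 * (k.+1 - k) - 1 + size [:: true] = 2); last by rewrite /=; lia.
    rewrite iterXY.
    have := Mx_fib 2 (X k) (X k + Y k).
    change (step (X k, Y k) false) with (X k, X k + Y k).
    rewrite !fibSS fib1 fib0; lia.
- rewrite iterXY /= Mx0 /=.
  have [-> _] := XYS k; lia.
Qed.

Lemma BB_nseq m p : BB p (nseq m false ++ [:: true]) = p.1.
Proof.
elim: m p => [|m IH] p /=; first by rewrite Mx0 /=; lia.
by rewrite IH.
Qed.

Definition hiw k := [:: true; false; false; true; false; true] ++ (nseq (2 * k).+2 false ++ [:: true]).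

Lemma BB_hi_eq R : BB (0, 1) ([:: true; false; false; true; false; true] ++ R) =
  maxn (Mx (size R).+4.+1 (0, 1)) (maxn (Mx (size R).+2 (1, 4)) (maxn (Mx (size R) (4, 11)) (BB (11, 7) R))).
Proof. by []. Qed.

Lemma Bhi k : 2 <= k -> BB (0, 1) (hiw k) <= X k.+1 + Y k.+1.
Proof.
move=> hk; have h4 := N4 hk; have h5 := N5 k; have [h6 h7] := XYS k.
have hW : Wk k <= X k.+1 + Y k.+1 by lia.
rewrite /hiw BB_hi_eq BB_nseq size_cat size_nseq /=.
rewrite maxnA; apply: le3.
- rewrite geq_max; apply/andP; split.
  + apply: leq_trans (Mx01 _) _; apply: leq_trans _ hW; apply: leq_trans _ (N1 k).
    have e : ((2 * k).+2 + 1).+4.+2 = (2 * k).+4.+4.+1 by lia.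
    by rewrite e.
  + apply: leq_trans (Mx14 _) _; apply: leq_trans _ hW; rewrite /Wk.
    have e1 : ((2 * k).+2 + 1).+2.+1 = (2 * k).+4.+2 by lia.
    have e2 : ((2 * k).+2 + 1).+2 = (2 * k).+4.+1 by lia.
    by rewrite e1 e2.
- have := Mx_fib ((2 * k).+2 + 1) 4 11.
  have e1 : ((2 * k).+2 + 1).+1 = (2 * k).+4 by lia.
  have e2 : ((2 * k).+2 + 1) = (2 * k).+3 by lia.
  rewrite e1 e2 -N6 /=; lia.
- have := N6 k; have := fib_pos (2 * k).+3; lia.
Qed.


Lemma val2_nseq m : val2 (nseq m false) = 0.
Proof. by elim: m => // m IH; rewrite val2_cons IH. Qed.

Lemma bin_Q k bs : bin (val2 (Qw k ++ bs)) = Qw k ++ bs.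
Proof. exact: (bin_word ([:: false; false; true; false; false] ++ (srep k [:: true; false] ++ bs))). Qed.

Lemma size_Q k : size (Qw k) = (2 * k).+4.+2.
Proof. rewrite /Qw size_cat size_srep /=; lia. Qed.

Theorem mainTheorem18 (n : nat) (hn : 3 <= n) (v : nat) :
  (record_setter v /\ size (bin v) = 2 * n + 7 /\
   prefix [:: true; false; false; true; false; false] (bin v))
  <->
  (v = val2 ([:: true; false; false; true; false; false]
               ++ srep n.-1 [:: true; false] ++ [:: false; true; false])
   \/
   v = val2 ([:: true; false; false; true; false; false]
               ++ srep n [:: true; false] ++ [:: false])).
Proof.
case: n hn => [|k] // hn.
have hk : 2 <= k by lia.
rewrite [k.+1.-1]/=.
have e1 : [:: true; false; false; true; false; false] ++ srep k [:: true; false] ++ [:: false; true; false]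
   = Qw k ++ [:: false; true; false] by rewrite /Qw catA.
have e2 : [:: true; false; false; true; false; false] ++ srep k.+1 [:: true; false] ++ [:: false]
   = Qw k ++ [:: true; false; false] by rewrite srepSr /Qw -!catA.
rewrite e1 e2.
set q := val2 (Qw k).
have val3 : forall b1 b2 b3 : bool, val2 (Qw k ++ [:: b1; b2; b3]) = q * 8 + (b1 * 4 + b2 * 2 + b3).
  by move=> [] [] []; rewrite val2_cat /val2 /=.
have aval3 : forall bs, a (val2 (Qw k ++ bs)) = (run (X k, Y k) bs).1.
  by move=> bs; rewrite aval1 run_cat runQ.
have A1 : a (q * 8 + 3) = 3 * X k + 2 * Y k.
  by rewrite (_ : q * 8 + 3 = val2 (Qw k ++ [:: false; true; true])) ?aval3 /= ?val3 //; lia.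
have A2 : a (q * 8 + 4) = X k + Y k.
  by rewrite (_ : q * 8 + 4 = val2 (Qw k ++ [:: true; false; false])) ?aval3 /= ?val3 //; lia.
have A3 : a (q * 8 + 5) = X k.+1 + Y k.+1.
  have [-> ->] := XYS k.
  by rewrite (_ : q * 8 + 5 = val2 (Qw k ++ [:: true; false; true])) ?aval3 /= ?val3 //; lia.
have h4 := N4 hk; have h5 := N5 k; have [h6 h7] := XYS k.
split.
- case=> [hrec [hsize hpre]].
  move/prefixP: hpre => [r hr].
  have hsr : size r = (2 * k).+3.
    by move: hsize; rewrite hr size_cat /=; lia.
  have hv : v = val2 ([:: true; false; false; true; false; false] ++ r) by rewrite -hr bin_val.
  have hv36 : v = 36 * 2 ^ (2 * k).+3 + val2 r by rewrite hv val2_cat hsr.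
  have hlo : 36 * 2 ^ (2 * k).+3 <= v by lia.
  have hhi : v < 37 * 2 ^ (2 * k).+3.
    by have := val2_lt r; rewrite hsr; lia.
  case: (ltnP v (q * 8 + 2)) => c1.
    exfalso.
    set j0 := val2 ([:: true; false; false; false] ++ (srep (k + 2) [:: true; false] ++ [:: true])).
    have aj0 : a j0 = Wk k.
      by rewrite /j0 aval1 run_cat run_cat run_srep Wj0.
    have j0lt : j0 < 36 * 2 ^ (2 * k).+3.
      rewrite /j0 val2_cat size_cat size_srep.
      have := val2_lt (srep (k + 2) [:: true; false] ++ [:: true]).
      rewrite size_cat size_srep.
      rewrite (_ : (k + 2) * size [:: true; false] + size [:: true] = (2 * k).+3 + 2); last by rewrite /=; lia.
      rewrite (_ : val2 [:: true; false; false; false] = 8) // expnD (_ : 2 ^ 2 = 4) //; lia.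
    have j0pos : 0 < j0 := val2_true_pos _.
    have := hrec j0.-1; rewrite /s prednK //.
    have hb : a v.+1 <= Wk k.
      apply: leq_trans (Bm1 k); apply: a_le_BB; rewrite val3 /=; lia.
    move=> H; have := H ltac:(lia); lia.
  case: (ltnP v (q * 8 + 3)) => c2.
    by left; rewrite val3 /=; lia.
  case: (ltnP v (q * 8 + 4)) => c3.
    exfalso.
    have ev : v = q * 8 + 3 by lia.
    have H : q * 8 + 2 < v by lia.
    have := hrec _ H; rewrite /s ev.
    have ea : (q * 8 + 2).+1 = q * 8 + 3 by lia.
    have eb : (q * 8 + 3).+1 = q * 8 + 4 by lia.
    rewrite ea eb A1 A2.
    move=> H2. have : 3 * X k + 2 * Y k < X k + Y k := H2.
    clear. lia.
  case: (ltnP v (q * 8 + 5)) => c4.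
    by right; rewrite val3 /=; lia.
  exfalso.
  have := hrec (q * 8 + 4); rewrite /s.
  rewrite (_ : (q * 8 + 4).+1 = q * 8 + 5); last by lia.
  rewrite A3.
  have hb : a v.+1 <= X k.+1 + Y k.+1.
    apply: leq_trans (Bhi hk); apply: a_le_BB.
    rewrite /hiw val2_cat val2_cat val2_nseq size_cat size_nseq.
    rewrite (_ : (2 * k).+2 + size [:: true] = (2 * k).+3); last by rewrite /=; lia.
    rewrite (_ : val2 [:: true; false; false; true; false; true] = 37) //.
    rewrite (_ : val2 [:: true] = 1) //.
    rewrite mul0n add0n. lia.
  move=> H; have := H ltac:(lia); lia.
- have hbits : forall bs, size bs = 3 ->
     size (bin (val2 (Qw k ++ bs))) = 2 * k.+1 + 7 /\
     prefix [:: true; false; false; true; false; false] (bin (val2 (Qw k ++ bs))).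
    move=> bs hs; rewrite bin_Q size_cat size_Q hs; split; first by lia.
    by rewrite /Qw -catA prefix_prefix.
  case=> ->.
  + split; last exact: hbits.
    move=> i hi; rewrite /s.
    apply: (@leq_ltn_trans (BB (0, 1) (Qw k ++ [:: false; true; true]))).
      apply: a_le_BB; move: hi; rewrite !val3 /=; lia.
    apply: leq_ltn_trans (Bm1 k) _.
    by rewrite val3 /= (_ : (q * 8 + 2).+1 = q * 8 + 3) ?A1 //; lia.
  + split; last exact: hbits.
    move=> i hi; rewrite /s.
    apply: (@leq_ltn_trans (BB (0, 1) (Qw k ++ [:: true; false; true]))).
      apply: a_le_BB; move: hi; rewrite !val3 /=; lia.
    apply: leq_ltn_trans (Bm2 hk) _.
    by rewrite val3 /= (_ : (q * 8 + 4).+1 = q * 8 + 5) ?A3 //; lia.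
Qed.
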